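(* Let $B_1,\dots,B_n$ be $n\times n$ complex Hadamard matrices (normalized so that all entries have absolute value $1/\sqrt n$), and let $B=[B_1\,|\,B_2\,|\cdots|\,B_n]$ be the $n\times n^2$ matrix whose columns are all columns of all $B_i$. Let $w_1,\dots,w_n\in\mathbb{C}^{n^2}$ be the rows of $B$. Then $\{B_1,\dots,B_n\}$ is a complete system of mutually unbiased Hadamards if and only if the vectors $w_i\circ w_j$, $1\le i\le j\le n$, are pairwise orthogonal (i.e. $\langle w_i\circ w_j| w_k\circ w_l\rangle=0$ whenever $\{i,j\}\neq\{k,l\}$ as multisets).
   Context: A complex Hadamard matrix is an $n\times n$ unitary matrix all of whose entries have the same absolute value $1/\sqrt{n}$. Two such matrices are mutually unbiased if $|\langle x|y\rangle|=1/\sqrt n$ for every column $x$ of one and every column $y$ of the other. A complete system of mutually unbiased Hadamards (MUHs) in $\mathbb{C}^n$ is a set of $n$ complex Hadamard matrices that are pairwise mutually unbiased (equivalently, together with the identity matrix their column sets form $n+1$ mutually unbiased bases). $\circ$ is the entrywise (Schur) product; $\langle x|y\rangle=\sum_t\overline{x_t}y_t$. *)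

(* Defs.v *)
(* Complex numbers are modelled by an arbitrary
   numClosedFieldType C (e.g. algC). *)
From HB Require Import structures.
From mathcomp Require Import all_boot all_order all_algebra.
Set Implicit Arguments. Unset Strict Implicit. Unset Printing Implicit Defensive.
Import Order.TTheory GRing.Theory Num.Theory.
Local Open Scope ring_scope.

Definition dotv (C : numClosedFieldType) (I : finType) (x y : I -> C) : C :=
  \sum_(t : I) (x t)^* * y t.

Definition colv (C : numClosedFieldType) (n : nat) (U : 'M[C]_n) (j : 'I_n)
  : 'I_n -> C := fun t => U t j.

Definition unitary (C : numClosedFieldType) (n : nat) (U : 'M[C]_n) : Prop :=
  (map_mx Num.conj U)^T *m U = 1%:M.

Definition hadamard (C : numClosedFieldType) (n : nat) (U : 'M[C]_n) : Prop :=
  unitary U /\ forall i j : 'I_n, `|U i j| = (sqrtC (n%:R : C))^-1.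

Definition mutually_unbiased (C : numClosedFieldType) (n : nat) (U V : 'M[C]_n)
  : Prop :=
  forall a b : 'I_n, `|dotv (colv U a) (colv V b)| = (sqrtC (n%:R : C))^-1.

Definition complete_MUH (C : numClosedFieldType) (n : nat)
  (Bs : 'I_n -> 'M[C]_n) : Prop :=
  (forall k, hadamard (Bs k)) /\
  (forall k l : 'I_n, k != l -> mutually_unbiased (Bs k) (Bs l)).

(* row i of B = [B_1 | ... | B_n], with columns indexed by pairs (k, c):
   column (k, c) of B is column c of B_k *)
Definition rowB (C : numClosedFieldType) (n : nat) (Bs : 'I_n -> 'M[C]_n)
  (i : 'I_n) : 'I_n * 'I_n -> C := fun m => Bs m.1 i m.2.

Definition schur (C : numClosedFieldType) (I : finType) (x y : I -> C) : I -> C :=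
  fun t => x t * y t.

(* Main.v *)
Require Import Defs.
From HB Require Import structures.
From mathcomp Require Import all_boot all_order all_algebra.
Set Implicit Arguments. Unset Strict Implicit. Unset Printing Implicit Defensive.
Import Order.TTheory GRing.Theory Num.Theory.
Local Open Scope ring_scope.

Section S.
Variables (C : numClosedFieldType) (n : nat) (Bs : 'I_n -> 'M[C]_n).

Definition Mv (x y : 'I_n * 'I_n) : C :=
  dotv (schur (rowB Bs x.1) (rowB Bs x.2)) (schur (rowB Bs y.1) (rowB Bs y.2)).
Definition Gv (t s : 'I_n * 'I_n) : C :=
  \sum_i (Bs t.1 i t.2)^* * Bs s.1 i s.2.

Lemma ac8 (a b c d e f g h : C) :
  (a*b)*(c*d)*((e*f)*(g*h)) = (a*e)*(b*f)*((c*g)*(d*h)).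
Proof. by rewrite mulrACA [(a*b)*_]mulrACA [(c*d)*_]mulrACA. Qed.

Lemma sq_sum (F G : 'I_n -> C) :
  (\sum_i F i) * (\sum_j G j) = \sum_(x : 'I_n * 'I_n) F x.1 * G x.2.
Proof. by rewrite big_distrlr /= pair_bigA. Qed.

Lemma frame : \sum_x \sum_y `|Mv x y| ^+ 2 = \sum_t \sum_s `|Gv t s| ^+ 4.
Proof.
under eq_bigr => x _ do under eq_bigr => y _ do
  rewrite normCK /Mv /dotv rmorph_sum big_distrlr /=.
rewrite exchange_big /=.
under eq_bigr => x _ do rewrite exchange_big /=.
rewrite exchange_big /=.
apply: eq_bigr => t _.
under eq_bigr => x _ do rewrite exchange_big /=.
rewrite exchange_big /=.
apply: eq_bigr => s _.
have -> : `|Gv t s| ^+ 4 = (Gv t s * Gv t s) * ((Gv t s)^* * (Gv t s)^*).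
  by rewrite (_ : 4 = 2 * 2)%N // exprM normCK expr2 mulrACA.
rewrite /Gv !rmorph_sum /= !sq_sum big_distrlr /=.
rewrite exchange_big /=.
apply: eq_bigr => x _; apply: eq_bigr => y _.
rewrite /schur /rowB !rmorphM /= !conjCK ac8.
done.
Qed.
Hypothesis hadB : forall k, hadamard (Bs k).

Lemma U1 p c d : \sum_i (Bs p i c)^* * Bs p i d = (c == d)%:R.
Proof.
have [[/matrixP H _]] := hadB p.
by have := H c d; rewrite !mxE => <-; apply: eq_bigr => i _; rewrite !mxE.
Qed.

Lemma U2 p i j : \sum_c Bs p j c * (Bs p i c)^* = (j == i)%:R.
Proof.
have [/mulmx1C/matrixP H _] := hadB p.
by have := H j i; rewrite !mxE => <-; apply: eq_bigr => c _; rewrite !mxE.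
Qed.

Lemma Gsame p c d : Gv (p, c) (p, d) = (c == d)%:R.
Proof. exact: U1. Qed.

Lemma GG_rows p q :
  \sum_c \sum_d `|Gv (p, c) (q, d)| ^+ 2 = n%:R.
Proof.
have -> : \sum_c \sum_d `|Gv (p, c) (q, d)| ^+ 2 =
  \sum_i \sum_j (\sum_c Bs p j c * (Bs p i c)^*) *
                (\sum_d Bs q i d * (Bs q j d)^*).
  under [RHS]eq_bigr => i _ do under eq_bigr => j _ do rewrite big_distrlr /=.
  under [RHS]eq_bigr => i _ do rewrite exchange_big /=.
  rewrite [RHS]exchange_big /=; apply: eq_bigr => c _.
  under [RHS]eq_bigr => i _ do rewrite exchange_big /=.
  rewrite [RHS]exchange_big /=; apply: eq_bigr => d _.
  rewrite normCK /Gv rmorph_sum big_distrlr /=.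
  apply: eq_bigr => i _; apply: eq_bigr => j _ /=.
  rewrite rmorphM /= conjCK.
  by rewrite mulrACA [_ * Bs p j c]mulrC [(Bs p j c * _) * _]mulrACA.
under eq_bigr => i _ do under eq_bigr => j _ do rewrite U2 U2.
rewrite -[n in RHS]card_ord -sumr_const; apply: eq_bigr => i _.
rewrite (bigD1 i) //= eqxx mulr1 big1 ?addr0 // => j /negbTE.
by rewrite eq_sym => ->; rewrite mul0r.
Qed.
Hypothesis npos : (0 < n)%N.

Lemma nz : (n%:R : C) != 0.
Proof. by rewrite pnatr_eq0 -lt0n. Qed.

Lemma varsum (F : 'I_n -> 'I_n -> C) : \sum_c \sum_d F c d = n%:R ->
  \sum_c \sum_d (F c d - n%:R^-1) ^+ 2 = \sum_c \sum_d F c d ^+ 2 - 1.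
Proof.
move=> HF.
under eq_bigr => c _ do under eq_bigr => d _ do rewrite sqrrB.
under eq_bigr => c _ do rewrite !big_split /= sumrN.
rewrite !big_split /= sumrN.
have -> : \sum_c \sum_d F c d * n%:R^-1 *+ 2 = 2%:R.
  under eq_bigr => c _ do rewrite sumrMnl -mulr_suml.
  by rewrite sumrMnl -mulr_suml HF mulfV ?nz.
have -> : \sum_(c < n) \sum_(d < n) n%:R^-1 ^+ 2 = 1 :> C.
  rewrite sumr_const sumr_const card_ord -mulrnA -[X in X = _]mulr_natr natrM.
  by rewrite expr2 mulrACA !mulVf ?nz ?mulr1.
by rewrite -addrA mulr2n opprD -addrA addNr addr0.
Qed.

Lemma G4 p q : \sum_c \sum_d `|Gv (p, c) (q, d)| ^+ 4 =
  1 + \sum_c \sum_d (`|Gv (p, c) (q, d)| ^+ 2 - n%:R^-1) ^+ 2.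
Proof.
rewrite varsum ?GG_rows // addrC subrK.
by apply: eq_bigr => c _; apply: eq_bigr => d _; rewrite -exprM.
Qed.

Lemma G4same p : \sum_c \sum_d `|Gv (p, c) (p, d)| ^+ 4 = n%:R.
Proof.
rewrite -[n in RHS]card_ord -sumr_const; apply: eq_bigr => c _.
rewrite (bigD1 c) //= Gsame eqxx normr1 expr1n big1 ?addr0 // => d /negbTE.
by rewrite Gsame eq_sym => ->; rewrite normr0 expr0n.
Qed.
Lemma ent2 p i c : `|Bs p i c| ^+ 2 = n%:R^-1.
Proof.
by have [_ ->] := hadB p; rewrite exprVn sqrtCK.
Qed.

Lemma Msym1 i j y : Mv (i, j) y = Mv (j, i) y.
Proof. by rewrite /Mv /dotv /=; apply: eq_bigr => t _; rewrite /schur [rowB _ i _ * _]mulrC. Qed.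

Lemma Msym2 x k l : Mv x (k, l) = Mv x (l, k).
Proof. by rewrite /Mv /dotv /=; apply: eq_bigr => t _; rewrite /schur [rowB _ k _ * _]mulrC. Qed.

Lemma Mdiag x : Mv x x = 1.
Proof.
rewrite /Mv /dotv.
under eq_bigr => t _ do rewrite mulrC -normCK /schur normrM exprMn /rowB !ent2.
rewrite sumr_const card_prod card_ord -[X in X = _]mulr_natr natrM.
by rewrite mulrACA !mulVf ?nz ?mulr1.
Qed.

Lemma Mdiag2 x : Mv x (x.2, x.1) = 1.
Proof. by case: x => i j; rewrite Msym2 Mdiag. Qed.

Definition S2 (x : 'I_n * 'I_n) : {set 'I_n * 'I_n} := [set x; (x.2, x.1)].
Definition Dx x := \sum_(y | y \notin S2 x) `|Mv x y| ^+ 2.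

Lemma Mrow x : \sum_y `|Mv x y| ^+ 2 = #|S2 x|%:R + Dx x.
Proof.
rewrite (bigID (fun y => y \in S2 x)) /=; congr (_ + _).
rewrite -sumr_const; apply: eq_bigr => y. by case/set2P => ->; rewrite ?Mdiag ?Mdiag2 normr1 expr1n.
Qed.

Lemma sum_if (p : 'I_n) (a b : C) : \sum_q (if p == q then a else b) = b *+ n + (a - b).
Proof.
have -> : \sum_q (if p == q then a else b) = \sum_q (b + (p == q)%:R * (a - b)).
  by apply: eq_bigr => q _; case: eqP => _; rewrite ?mul1r ?mul0r ?addr0 // addrC subrK.
rewrite big_split /= sumr_const card_ord; congr (_ + _).
rewrite (bigD1 p) //= eqxx mul1r big1 ?addr0 // => q /negbTE.
by rewrite eq_sym => ->; rewrite mul0r.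
Qed.

Definition Epq p q := \sum_c \sum_d (`|Gv (p, c) (q, d)| ^+ 2 - n%:R^-1) ^+ 2.

Lemma master : \sum_x Dx x = \sum_p \sum_q (p != q)%:R * Epq p q.
Proof.
have H1 : \sum_x \sum_y `|Mv x y| ^+ 2 =
    \sum_p \sum_q (#|S2 (p, q)|%:R : C) + \sum_x Dx x.
  under eq_bigr => x _ do rewrite Mrow.
  rewrite big_split /=; congr (_ + _).
  by rewrite [RHS]pair_bigA; apply: eq_bigr => -[p q] _.
have H2 : \sum_(t : 'I_n * 'I_n) \sum_(s : 'I_n * 'I_n) `|Gv t s| ^+ 4 =
    \sum_(p < n) \sum_(q < n) (if p == q then n%:R else 1) + \sum_p \sum_q (p != q)%:R * Epq p q.
  rewrite -big_split /=.
  transitivity (\sum_p \sum_c \sum_q \sum_d `|Gv (p, c) (q, d)| ^+ 4).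
    rewrite [RHS]pair_bigA; apply: eq_bigr => -[p c] _.
    by rewrite [RHS]pair_bigA; apply: eq_bigr => -[q d] _.
  apply: eq_bigr => p _; rewrite exchange_big /= -big_split; apply: eq_bigr => q _.
  have E : \sum_c \sum_d `|Gv (p, c) (q, d)| ^+ 4 =
      (if p == q then n%:R else 1) + (p != q)%:R * Epq p q.
    case: eqP => [<-|_]; first by rewrite G4same mul0r addr0.
    by rewrite G4 /= mul1r.
  exact: E.
have := frame; rewrite H1 H2.
have -> : \sum_p \sum_q #|S2 (p, q)|%:R = \sum_(p < n) \sum_(q < n) (if p == q then n%:R else 1 : C).
  apply: eq_bigr => p _.
  have -> : \sum_q #|S2 (p, q)|%:R = \sum_(q < n) (if p == q then 1 else 2%:R : C).
    apply: eq_bigr => q _; rewrite /S2 cards2 /= xpair_eqE.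
    by case: eqP => [->|]; rewrite ?eqxx //= andbF.
  rewrite !sum_if; case: n npos => // m _.
  by rewrite mulr2n mulrnDl opprD addNKr addrA.
by move/addrI.
Qed.
End S.

Lemma Moff (C : numClosedFieldType) (n : nat) (Bs : 'I_n -> 'M[C]_n)
  (H : forall i j k l : 'I_n, (i <= j)%N -> (k <= l)%N -> (i, j) != (k, l) ->
        Mv Bs (i, j) (k, l) = 0) x y :
  y \notin S2 x -> Mv Bs x y = 0.
Proof.
case: x => i j; case: y => k l.
rewrite /S2 in_set2 negb_or !xpair_eqE /= => /andP[h1 h2].
case: (leqP i j) => hij; case: (leqP k l) => hkl.
- apply: H => //; rewrite xpair_eqE.
  by apply: contra h1 => /andP[/eqP-> /eqP->]; rewrite !eqxx.
- rewrite Msym2; apply: H => //; first exact: ltnW.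
  by rewrite xpair_eqE; apply: contra h2 => /andP[/eqP-> /eqP->]; rewrite !eqxx.
- rewrite Msym1; apply: H => //; first exact: ltnW.
  by rewrite xpair_eqE; apply: contra h2 => /andP[/eqP-> /eqP->]; rewrite !eqxx.
- rewrite Msym1 Msym2; apply: H; try exact: ltnW.
  by rewrite xpair_eqE; apply: contra h1 => /andP[/eqP-> /eqP->]; rewrite !eqxx.
Qed.

Theorem theorem6 (C : numClosedFieldType) (n : nat) (Bs : 'I_n -> 'M[C]_n) :
  (forall k, hadamard (Bs k)) ->
  (complete_MUH Bs <->
   forall i j k l : 'I_n, (i <= j)%N -> (k <= l)%N -> (i, j) != (k, l) ->
     dotv (schur (rowB Bs i) (rowB Bs j)) (schur (rowB Bs k) (rowB Bs l)) = 0).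
Proof.
move=> hadB.
have [n0|npos] := posnP n.
  subst n; split; first by move=> _ i; case: i.
  by move=> _; split => // k; case: k.
have Mst := master hadB npos.
have Dge x : 0 <= Dx Bs x by apply: sumr_ge0 => y _; rewrite exprn_ge0 ?normr_ge0.
have real1 (z : C) : `|z| ^+ 2 - n%:R^-1 \is Num.real.
  by rewrite rpredB ?rpredV ?rpredX ?realn ?normr_real.
have Tge (z : C) : 0 <= (`|z| ^+ 2 - n%:R^-1) ^+ 2.
  by rewrite -real_normK ?real1 // exprn_ge0 ?normr_ge0.
have Ege p q : 0 <= Epq Bs p q.
  by apply: sumr_ge0 => c _; apply: sumr_ge0 => d _; apply: Tge.
split.
- case=> _ MU i j k l hij hkl neq.
  have E0 : \sum_x Dx Bs x = 0.
    rewrite Mst big1 // => p _; rewrite big1 // => q _.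
    case: eqP => [_|/eqP pq]; first by rewrite mul0r.
    rewrite /Epq big1 ?mulr0 // => c _; rewrite big1 // => d _.
    have := MU p q pq c d; rewrite /Gv => ->.
    by rewrite exprVn sqrtCK subrr expr0n.
  have /eqP := @psumr_eq0P _ _ _ _ (fun x _ => Dge x) E0 (i, j) isT.
  rewrite /Dx => /eqP D0.
  have nin : (k, l) \notin S2 (i, j).
    rewrite /S2 in_set2 negb_or !xpair_eqE /=; apply/andP; split.
      by apply: contra neq => /andP[/eqP-> /eqP->]; rewrite xpair_eqE !eqxx.
    apply/negP => /andP[/eqP ekj /eqP eli]; move: neq hkl.
    rewrite ekj eli => neq hji.
    have eij : i = j by apply/val_inj/eqP; rewrite eqn_leq hij hji.
    by rewrite eij eqxx in neq.
  have := @psumr_eq0P _ _ _ _ (fun y _ => exprn_ge0 2 (normr_ge0 _)) D0 (k, l) nin.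
  by move/eqP; rewrite expf_eq0 normr_eq0 => /andP[_ /eqP].
- move=> cond; split => // p q pq c d.
  have D0 x : Dx Bs x = 0.
    by rewrite /Dx big1 // => y /(Moff cond) ->; rewrite normr0 expr0n.
  have S0 : \sum_p \sum_q (p != q)%:R * Epq Bs p q = 0.
    by rewrite -Mst big1.
  have /eqP := @psumr_eq0P _ _ _ _ (fun p _ => sumr_ge0 _ (fun q _ =>
     mulr_ge0 (ler0n _ _) (Ege p q))) S0 p isT.
  move=> /eqP S1.
  have := @psumr_eq0P _ _ _ _ (fun q _ => mulr_ge0 (ler0n _ _) (Ege p q)) S1 q isT.
  rewrite pq mul1r /Epq => E0.
  have /eqP := @psumr_eq0P _ _ _ _ (fun c _ => sumr_ge0 _ (fun d _ => Tge _)) E0 c isT.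
  move=> /eqP E1.
  have := @psumr_eq0P _ _ _ _ (fun d _ => Tge _) E1 d isT.
  move/eqP; rewrite expf_eq0 /= subr_eq0 => /eqP e2.
  apply/eqP; rewrite -(@eqrXn2 _ 2) ?normr_ge0 ?invr_ge0 ?sqrtC_ge0 ?ler0n //.
  by rewrite exprVn sqrtCK; apply/eqP; exact: e2.
Qed.
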